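(* Let $A$ be an infinite set, $I$ a set, and $F$ a filter on the partition lattice $\Pi(I)$. Let $\theta$ be a congruence on the algebra $\Omega(A)^{F}$. Define $Z\subseteq\{\emptyset\}\cup\bigcup F$ by: $R\in Z$ if and only if for all $f,g\in\Omega(A)^{F}$ with $f|_{R}=g|_{R}$ we have $(f,g)\in\theta$. Then $Z$ is a filter on the Boolean algebra $\{\emptyset\}\cup\bigcup F$, and for all $f,g\in\Omega(A)^{F}$ we have $(f,g)\in\theta$ if and only if $\{i\in I: f(i)=g(i)\}\in Z$.
   Context: For each $a\in A$ let $\hat{a}$ be a constant symbol, and for each $n\geq1$ and each $f:A^{n}\to A$ let $\hat{f}$ be an $n$-ary operation symbol. $\Omega(A)$ is the algebra with universe $A$ in which $\hat{a}$ is interpreted as $a$ and $\hat{f}$ as $f$. $\Pi(I)$ is the lattice of partitions of $I$ (with nonempty blocks), where $P\preceq Q$ means $P$ refines $Q$ and $P\wedge Q$ is the common refinement; a filter $F$ on $\Pi(I)$ is a nonempty set closed under $\wedge$ and upward closed under coarsening. For $f:I\to X$, $\Pi(f)=\{f^{-1}(\{x\}):x\in X\}\setminus\{\emptyset\}$. $\Omega(A)^{F}$ denotes the subalgebra $\{f\in A^{I}:\Pi(f)\in F\}$ of $\Omega(A)^{I}$. $\bigcup F$ denotes the set of all blocks of all partitions in $F$; the set $\{\emptyset\}\cup\bigcup F$ is a Boolean algebra of subsets of $I$ under the set operations. *)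

(* Defs.v *)
From mathcomp Require Import all_boot.
From mathcomp Require Import boolp classical_sets cardinality.
Set Implicit Arguments. Unset Strict Implicit. Unset Printing Implicit Defensive.
Local Open Scope classical_set_scope.

Definition is_partition (I : Type) (P : set (set I)) : Prop :=
  (forall B, P B -> B !=set0) /\
  (forall B C, P B -> P C -> B `&` C !=set0 -> B = C) /\
  (forall i : I, exists2 B, P B & B i).

Definition refines (I : Type) (P Q : set (set I)) : Prop :=
  forall B, P B -> exists2 C, Q C & B `<=` C.

Definition pmeet (I : Type) (P Q : set (set I)) : set (set I) :=
  [set C | exists B, exists D, [/\ P B, Q D, C = B `&` D & C !=set0]].

Definition Pi (I X : Type) (f : I -> X) : set (set I) :=
  [set B | (exists x : X, B = f @^-1` [set x]) /\ B !=set0].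

Definition partition_filter (I : Type) (F : set (set (set I))) : Prop :=
  [/\ (forall P, F P -> is_partition P),
      F !=set0,
      (forall P Q, F P -> F Q -> F (pmeet P Q)) &
      (forall P Q, F P -> is_partition Q -> refines P Q -> F Q)].

Definition OmegaF (I A : Type) (F : set (set (set I))) : set (I -> A) :=
  [set f | F (Pi f)].

(* A congruence on Omega(A)^F: an equivalence relation on the universe
   compatible with every operation hat g, g : A^n -> A, n >= 1, acting
   pointwise (constants impose no condition). n-ary operations are
   functions ('I_n.+1 -> A) -> A. *)
Definition is_congruence (I A : Type) (F : set (set (set I)))
    (theta : (I -> A) -> (I -> A) -> Prop) : Prop :=
  [/\ (forall f g, theta f g -> OmegaF F f /\ OmegaF F g),
      (forall f, OmegaF F f -> theta f f),
      (forall f g, theta f g -> theta g f),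
      (forall f g h, theta f g -> theta g h -> theta f h) &
      (forall (n : nat) (op : ('I_n.+1 -> A) -> A)
              (fs gs : 'I_n.+1 -> I -> A),
          (forall k, theta (fs k) (gs k)) ->
          theta (fun i => op (fun k => fs k i)) (fun i => op (fun k => gs k i)))].

Definition blockBA (I : Type) (F : set (set (set I))) : set (set I) :=
  [set set0] `|` \bigcup_(P in F) P.

Definition Zfam (I A : Type) (F : set (set (set I)))
    (theta : (I -> A) -> (I -> A) -> Prop) : set (set I) :=
  [set R | blockBA F R /\
     (forall f g : I -> A, OmegaF F f -> OmegaF F g ->
        (forall i, R i -> f i = g i) -> theta f g)].

Definition BA_filter (I : Type) (B Z : set (set I)) : Prop :=
  [/\ Z `<=` B,
      Z !=set0,
      (forall R S, Z R -> Z S -> Z (R `&` S)) &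
      (forall R S, Z R -> B S -> R `<=` S -> Z S)].

(* Main.v *)
Require Import Defs.
From mathcomp Require Import all_boot.
From mathcomp Require Import boolp classical_sets cardinality.
Local Open Scope classical_set_scope.
Set Implicit Arguments. Unset Strict Implicit.

Lemma Pi_part (I X : Type) (k : I -> X) : is_partition (Pi k).
Proof.
split; first by move=> B [_ ne].
split.
  move=> B C [[a ->] _] [[c ->] _] [x [/= fa fc]].
  by have -> : a = c by rewrite -fa -fc.
move=> i; exists (k @^-1` [set k i]) => //; split; first by exists (k i).
by exists i.
Qed.

Lemma const_blocks (I X : Type) (F : set (set (set I))) (P : set (set I)) (k : I -> X) :
  partition_filter F -> F P ->
  (forall B, P B -> forall x y, B x -> B y -> k x = k y) -> F (Pi k).
Proof.
move=> [Fp Fne Fm Fu] FP H; apply: (Fu P) => //; first exact: Pi_part.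
move=> B PB; have [b Bb] : B !=set0 by have [h _] := Fp P FP; exact: h.
exists (k @^-1` [set k b]); first by split; [exists (k b) | exists b].
by move=> y By; rewrite /= (H B PB y b).
Qed.

Lemma sat_BA (I : Type) (F : set (set (set I))) (P : set (set I)) (S : set I) :
  partition_filter F -> F P ->
  (forall B, P B -> forall x y, B x -> B y -> S x -> S y) -> blockBA F S.
Proof.
move=> pf FP H.
have FQ : F (Pi (fun i => asbool (S i))).
  apply: (const_blocks pf FP) => B PB x y Bx By.
  case: (asboolP (S x)) => Sx; case: (asboolP (S y)) => Sy //.
    by case: Sy; exact: (H B PB x y).
  by case: Sx; exact: (H B PB y x).
case: (pselect (S !=set0)) => [ne|e].
  right; exists (Pi (fun i => asbool (S i))) => //; split => //.
  exists true; apply/seteqP; split => x /=.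
    by move=> Sx; apply/asboolP.
  by move/asboolP.
left; apply/seteqP; split => x //= Sx; apply: e; by exists x.
Qed.

Lemma BA_sat (I : Type) (F : set (set (set I))) (R : set I) :
  partition_filter F -> blockBA F R ->
  exists2 P, F P & (forall B, P B -> forall x y, B x -> B y -> R x -> R y).
Proof.
move=> [Fp [P0 FP0] Fm Fu] [->|[P FP PR]].
  by exists P0 => // B _ x y _ _.
exists P => // B PB x y Bx By Rx.
have [_ [dis _]] := Fp P FP.
by have -> : R = B by apply: dis => //; exists x.
Qed.

Lemma Pi_const (I X : Type) (k : I -> X) B x y :
  Pi k B -> B x -> B y -> k x = k y.
Proof. by move=> [[a ->] _] /= -> ->. Qed.

Unset Implicit Arguments.
Theorem mainTheorem2 (A I : Type) (F : set (set (set I)))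
    (theta : (I -> A) -> (I -> A) -> Prop) :
  infinite_set [set: A] ->
  partition_filter F ->
  is_congruence F theta ->
  BA_filter (blockBA F) (Zfam F theta) /\
  (forall f g : I -> A, OmegaF F f -> OmegaF F g ->
     (theta f g <-> Zfam F theta [set i | f i = g i])).
Proof.
move=> _ pf cg.
have pf' := pf; case: pf' => [Fp [P0 FP0] Fm Fu].
case: cg => [thO threfl thsym thtrans thop].
have Emem : forall f g : I -> A, OmegaF F f -> OmegaF F g ->
    blockBA F [set i | f i = g i].
  move=> f g Of Og; apply: (sat_BA pf (Fm _ _ Of Og)).
  move=> C [B [D [PB PD -> _]]] x y [Bx Dx] [By Dy] /= e.
  by rewrite (Pi_const PB By Bx) (Pi_const PD Dy Dx).
split; last first.
  move=> f g Of Og; split; last first.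
    by move=> [_ H]; apply: H.
  move=> tfg; split; first exact: Emem.
  move=> f' g' Of' Og' agr.
  pose fs := fun k : 'I_4 => if val k == 0 then f else if val k == 1 then g
                             else if val k == 2 then f' else g'.
  pose gs := fun k : 'I_4 => if val k == 0 then g else if val k == 1 then g
                             else if val k == 2 then f' else g'.
  pose op := fun x : 'I_4 -> A =>
    if asbool (x (@Ordinal 4 0 isT) = x (@Ordinal 4 1 isT))
    then x (@Ordinal 4 3 isT) else x (@Ordinal 4 2 isT).
  have := thop 3 op fs gs.
  have -> : (fun i => op (fun k => fs k i)) = f'.
    apply: funext => i; rewrite /op /fs /=.
    by case: asboolP => // /agr ->.
  have -> : (fun i => op (fun k => gs k i)) = g'.
    by apply: funext => i; rewrite /op /gs /=; case: asboolP.
  apply; case=> -[|[|[|[|m]]]] Hm; rewrite /fs /gs /=.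
  - exact: tfg.
  - by apply: threfl; case: (thO _ _ tfg).
  - exact: threfl.
  - exact: threfl.
  - by [].
split.
- by move=> R [].
- exists setT; split.
    by apply: (sat_BA pf FP0).
  move=> f g Of Og agr; have -> : f = g by apply: funext => i; apply: agr.
  exact: threfl.
- move=> R S [BR ZR] [BS ZS].
  have [P FP satR] := BA_sat pf BR.
  have [Q FQ satS] := BA_sat pf BS.
  split.
    apply: (sat_BA pf (Fm _ _ FP FQ)).
    move=> C [B [D [PB PD -> _]]] x y [Bx Dx] [By Dy] [Rx Sx]; rewrite /setI /=; split.
    exact: (satR B PB x y).
    exact: (satS D PD x y).
  move=> f g Of Og agr.
  pose h := fun i => if asbool (R i) then f i else g i.
  have Oh : OmegaF F h.
    apply: (const_blocks pf (Fm _ _ (Fm _ _ Of Og) FP)).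
    move=> C [BD [E [[B [D [PB PD -> _]]] PE -> _]]] x y [[Bx Dx] Ex] [[By Dy] Ey].
    rewrite /h; case: (asboolP (R x)) => Rx; case: (asboolP (R y)) => Ry.
    + exact: (Pi_const PB).
    + by case: Ry; apply: (satR E PE x y).
    + by case: Rx; apply: (satR E PE y x).
    + exact: (Pi_const PD).
  apply: (thtrans _ h).
    apply: ZR => // i Ri; rewrite /h; by case: asboolP.
  apply: ZS => // i Si; rewrite /h; case: asboolP => // Ri.
  by apply: agr.
- move=> R S [BR ZR] BS RS; split => // f g Of Og agr.
  by apply: ZR => // i Ri; apply: agr; apply: RS.
Qed.
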